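(* Let $\mathcal{X}=\{1,\ldots,d\}$, let $\mathcal{S}$ be the probability simplex in $\mathbb{R}^d$ (identified with probability measures on $\mathcal{X}$), $\mathcal{S}^\circ=\{p\in\mathcal{S}:p_x>0\ \forall x\}$, and $\mathcal{H}_0=\{v\in\mathbb{R}^d:\sum_x v_x=0\}$. Let $K:\mathcal{X}\times\mathbb{R}^d\to\mathbb{R}$ be such that each $K^x(\cdot)=K(x,\cdot)$ is continuously differentiable on $\mathbb{R}^d$, and let $(\alpha(x,y))_{x,y\in\mathcal{X}}$ be an irreducible symmetric matrix with zero diagonal and off-diagonal entries in $\{0,1\}$. Define $$H^x(p)=K^x(p)+\sum_{z\in\mathcal{X}}\Big(\frac{\partial}{\partial p_x}K^z(p)\Big)p_z,\qquad \Psi(x,y,p)=H^y(p)-H^x(p),$$ $$\Gamma_{xy}(p)=e^{-(\Psi(x,y,p))^+}\alpha(x,y)\ (x\ne y),\qquad \Gamma_{xx}(p)=-\sum_{y\ne x}\Gamma_{xy}(p),$$ and $F(p)=\sum_{x\in\mathcal{X}}(K^x(p)+\log p_x)p_x$ for $p\in\mathcal{S}$. Let $p\in\mathcal{S}$. Then $p$ is a fixed point of the ODE $\frac{d}{dt}p(t)=p(t)\Gamma(p(t))$ (i.e. $p\Gamma(p)=0$) if and only if $p\in\mathcal{S}^\circ$ and $\frac{\partial}{\partial v}F(p)=0$ for all $v\in\mathcal{H}_0$.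
   Context: $\alpha$ irreducible means the graph on $\mathcal{X}$ with edges $\{x,y\}$ where $\alpha(x,y)=1$ is connected. For $p\in\mathcal{S}^\circ$ and $v\in\mathcal{H}_0$, $\frac{\partial}{\partial v}F(p)=\frac{d}{ds}F(p+sv)\big|_{s=0}$ denotes the directional derivative of $F$ (the formula defining $F$ makes sense for all vectors with positive entries). *)

(* Defs.v *)
From HB Require Import structures.
From mathcomp Require Import all_boot all_order all_algebra.
From mathcomp Require Import all_classical all_reals all_analysis.
Set Implicit Arguments. Unset Strict Implicit. Unset Printing Implicit Defensive.
Import Order.TTheory GRing.Theory Num.Theory.
Import numFieldNormedType.Exports.
Local Open Scope ring_scope.

Section Defs.
Variables (R : realType) (d : nat).

Definition simplex (p : 'rV[R]_d) : Prop :=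
  (forall x, 0 <= p ord0 x) /\ \sum_x p ord0 x = 1.

Definition simplex_int (p : 'rV[R]_d) : Prop :=
  simplex p /\ (forall x, 0 < p ord0 x).

Definition H0 (v : 'rV[R]_d) : Prop := \sum_x v ord0 x = 0.

Definition ebasis (x : 'I_d) : 'rV[R]_d := delta_mx ord0 x.

Definition partial (f : 'rV[R]_d -> R) (x : 'I_d) (p : 'rV[R]_d) : R :=
  'D_(ebasis x) f p.

Definition C1 (f : 'rV[R]_d -> R) : Prop :=
  (forall p, differentiable f p) /\ (forall x, continuous (partial f x)).

Variable K : 'I_d -> 'rV[R]_d -> R.

Definition H (x : 'I_d) (p : 'rV[R]_d) : R :=
  K x p + \sum_z partial (K z) x p * p ord0 z.

Definition Psi (x y : 'I_d) (p : 'rV[R]_d) : R := H y p - H x p.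

Variable alpha : 'M[R]_d.

Definition Gamma (p : 'rV[R]_d) : 'M[R]_d :=
  \matrix_(x, y)
    if x == y then - \sum_(y' | y' != x) expR (- Num.max (Psi x y' p) 0) * alpha x y'
    else expR (- Num.max (Psi x y p) 0) * alpha x y.

Definition Ffun (p : 'rV[R]_d) : R :=
  \sum_x (K x p + ln (p ord0 x)) * p ord0 x.

(* alpha irreducible: the graph with edges {x,y} where alpha x y = 1 is connected *)
Definition alpha_irreducible : Prop :=
  forall x y : 'I_d, connect (fun a b => alpha a b == 1) x y.

End Defs.

(* Main.v *)
Require Import Defs.
From HB Require Import structures.
From mathcomp Require Import all_boot all_order all_algebra.
From mathcomp Require Import all_classical all_reals all_analysis.
From mathcomp Require Import ring lra.
Import Order.TTheory GRing.Theory Num.Theory.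
Import numFieldNormedType.Exports.
Local Open Scope ring_scope.

Section Calc.
Variables (R : realType) (d : nat).

Lemma dfun_sum (f : 'rV[R]_d -> R) p v : differentiable f p ->
  is_derive p v f (\sum_x v ord0 x * partial f x p).
Proof.
move=> df; apply: DeriveDef; first exact: diff_derivable.
rewrite deriveE //.
rewrite [in LHS](matrix_sum_delta v) big_ord1 linear_sum.
apply: eq_bigr => x _; rewrite linearZ /= /partial deriveE //.
Qed.

Lemma dcoord (p v : 'rV[R]_d) i : is_derive p v (fun q : 'rV[R]_d => q ord0 i) (v ord0 i).
Proof.
have @f : {linear 'rV[R]_d -> R}.
  by exists (fun N : 'M[R]_(_, _) => N ord0 i); do 2![eexists]; do ?[constructor];
     rewrite ?mxE// => ? *; rewrite ?mxE//; move=> ?; rewrite !mxE.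
rewrite (_ : (fun _ => _) = f) //.
have fc : continuous f by exact: coord_continuous.
apply: DeriveDef; first exact/diff_derivable/linear_differentiable.
by rewrite deriveE ?diff_lin //; exact: linear_differentiable.
Qed.

Lemma dln (p v : 'rV[R]_d) i : 0 < p ord0 i ->
  is_derive p v (fun q : 'rV[R]_d => ln (q ord0 i)) (v ord0 i / p ord0 i).
Proof.
move=> pi.
have dl : differentiable (@ln R) (p ord0 i).
  by apply/derivable1_diffP; have [] := is_derive1_ln pi.
have dc : differentiable (fun q : 'rV[R]_d => q ord0 i) p by exact: differentiable_coord.
have dcv : 'd (fun q : 'rV[R]_d => q ord0 i) p v = v ord0 i.
  by rewrite -deriveE //; have [_ ->] := dcoord p v i.
change (is_derive p v ((@ln R) \o (fun q : 'rV[R]_d => q ord0 i)) (v ord0 i / p ord0 i)).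
apply: DeriveDef; first exact/diff_derivable/differentiable_comp.
rewrite deriveE; last exact: differentiable_comp.
rewrite diff_comp //= dcv.
have -> : v ord0 i = v ord0 i *: (1:R) by rewrite /GRing.scale /= mulr1.
rewrite linearZ /= -deriveE //; have [_ ->] := is_derive1_ln pi.
by rewrite -mulr_algl.
Qed.
End Calc.

Section Calc2.
Variables (R : realType) (d : nat).
Lemma dF (K : 'I_d -> 'rV[R]_d -> R) (p v : 'rV[R]_d) :
  (forall x, differentiable (K x) p) -> (forall x, 0 < p ord0 x) ->
  is_derive p v (Ffun K) (\sum_x v ord0 x * (H K x p + ln (p ord0 x) + 1)).
Proof.
move=> dK pp.
have -> : Ffun K = \sum_(i < d) ((fun q : 'rV[R]_d => K i q + ln (q ord0 i)) * (fun q => q ord0 i)).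
  by apply/funext => q; rewrite /Ffun fct_sumE.
apply: is_derive_eq.
  apply: is_derive_sum => i; apply: is_deriveM; last exact: dcoord.
  apply: is_deriveD; [exact: dfun_sum | exact: dln].
rewrite /=.
transitivity (\sum_i ((K i p + ln (p ord0 i)) * v ord0 i + v ord0 i) +
   \sum_i \sum_x p ord0 i * (v ord0 x * partial (K i) x p)).
  rewrite -big_split /=; apply: eq_bigr => i _.
  rewrite /GRing.scale /= mulrDr mulr_sumr mulrCA divff ?(gt_eqF (pp i))// mulr1.
  ring.
rewrite exchange_big -big_split /=; apply: eq_bigr => x _.
have -> : \sum_i p ord0 i * (v ord0 x * partial (K i) x p) =
  v ord0 x * \sum_z partial (K z) x p * p ord0 z.
  by rewrite mulr_sumr; apply: eq_bigr => z _; ring.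
rewrite /H; ring.
Qed.
End Calc2.


Lemma harm (R : realType) (d : nat) (q : 'I_d -> R) (w : 'I_d -> 'I_d -> R) (e : rel 'I_d) :
  (forall x y, 0 <= w x y) -> (forall x y, e x y -> 0 < w x y) ->
  symmetric e -> (forall y, \sum_x w x y * (q x - q y) = 0) ->
  (forall x y, connect e x y) -> forall x y, q x = q y.
Proof.
move=> w0 wp se harmq conn x y.
have [m _ Hm] := @arg_maxP _ _ _ x xpredT q isT.
have step a b : e a b -> q a = q m -> q b = q m.
  move=> eab qa.
  have := harmq a.
  have tle i : w i a * (q i - q a) <= 0.
    by rewrite mulr_ge0_le0 // subr_le0 qa; apply: Hm.
  move=> /eqP; rewrite -oppr_eq0 -sumrN psumr_eq0; last by move=> i _; rewrite oppr_ge0.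
  move=> /allP /(_ b (mem_index_enum b)) /=; rewrite oppr_eq0 mulf_eq0.
  have eba : e b a by rewrite se.
  rewrite (gt_eqF (wp _ _ eba)) /= subr_eq0 => /eqP ->; exact: qa.
have cl : closed_mem e (mem [pred i | q i == q m]).
  move=> a b eab; rewrite !inE; apply/idP/idP => /eqP h; apply/eqP.
    exact: step eab h.
  by apply: step h; rewrite se.
have cs := sym_connect_sym se.
have := @closed_connect _ e _ cl _ _ (conn m x); have := @closed_connect _ e _ cl _ _ (conn m y).
rewrite !inE eqxx => /esym/eqP -> /esym/eqP ->. by [].
Qed.

Lemma maxkey (R : realType) (a b : R) :
  expR (- Num.max (b - a) 0) = expR a * expR (- Num.max a b).
Proof.
rewrite -expRD; congr expR.
by case: (leP (b - a) 0) => ?; case: (leP a b) => ?; lra.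
Qed.

Lemma sum_ebasis (R : realType) (d : nat) (a : 'I_d) (g : 'I_d -> R) :
  \sum_x @ebasis R d a ord0 x * g x = g a.
Proof.
rewrite (bigD1 a) //= big1 ?addr0; first by rewrite mxE !eqxx mul1r.
by move=> x xa; rewrite mxE (negbTE xa) andbF mul0r.
Qed.

Lemma sum_ebasis1 (R : realType) (d : nat) (a : 'I_d) :
  \sum_x @ebasis R d a ord0 x = 1.
Proof.
rewrite -[RHS](@sum_ebasis R d a (fun _ => 1)); apply: eq_bigr => x _; by rewrite mulr1.
Qed.

Lemma colA (R : realType) (d : nat) (K : 'I_d -> 'rV[R]_d -> R) (alpha : 'M[R]_d)
  (Halpha_sym : forall x y, alpha x y = alpha y x)
  (Halpha_diag : forall x, alpha x x = 0) (p : 'rV[R]_d) y :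
  (p *m Gamma K alpha p) ord0 y =
  \sum_x (expR (- Num.max (H K x p) (H K y p)) * alpha x y) *
     (p ord0 x * expR (H K x p) - p ord0 y * expR (H K y p)).
Proof.
have Gd : Gamma K alpha p y y = - \sum_(y' | y' != y) expR (- Num.max (H K y' p - H K y p) 0) * alpha y y'.
  by rewrite /Gamma mxE eqxx.
have Go x : x != y -> Gamma K alpha p x y = expR (- Num.max (H K y p - H K x p) 0) * alpha x y.
  by move=> xy; rewrite /Gamma mxE (negbTE xy).
rewrite [LHS]mxE.
have mk := @maxkey R.
move: Gd Go mk; set G := Gamma K alpha p; set hh := H K.
clearbody G hh; generalize (@expR R) => E Gd Go mk.
rewrite (bigD1 y) //= [in RHS](bigD1 y) //= (Halpha_diag y) mulr0 mul0r add0r.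
rewrite Gd mulrN mulr_sumr -sumrN -big_split /=.
apply: eq_bigr => x xy; rewrite Go // !mk (Halpha_sym y x).
rewrite (maxC (hh y p)); ring.
Qed.

Theorem theorem4p1 (R : realType) (d : nat) (K : 'I_d -> 'rV[R]_d -> R)
  (alpha : 'M[R]_d)
  (HK : forall x, C1 (K x))
  (Halpha01 : forall x y, alpha x y = 0 \/ alpha x y = 1)
  (Halpha_sym : forall x y, alpha x y = alpha y x)
  (Halpha_diag : forall x, alpha x x = 0)
  (Halpha_irr : alpha_irreducible alpha)
  (p : 'rV[R]_d) (Hp : simplex p) :
  p *m Gamma K alpha p = 0 <->
  (simplex_int p /\ forall v, H0 v -> is_derive p v (Ffun K) 0).
Proof.
have colA' := @colA R d K alpha Halpha_sym Halpha_diag p.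
set h := fun x => H K x p.
set q := fun x => p ord0 x * expR (h x).
have dK x : differentiable (K x) p by exact: (HK x).1.
split.
- move=> Hfix.
  have hq : forall x y, q x = q y.
    apply: (@harm R d q (fun x y => expR (- Num.max (h x) (h y)) * alpha x y) (fun a b => alpha a b == 1)).
    + move=> x y; apply: mulr_ge0; first exact: expR_ge0.
      by case: (Halpha01 x y) => ->.
    + by move=> x y /eqP ->; rewrite mulr1 expR_gt0.
    + by move=> x y; rewrite Halpha_sym.
    + by move=> y; rewrite -colA' Hfix mxE.
    + exact: Halpha_irr.
  have pp : forall x, 0 < p ord0 x.
    move=> x; rewrite lt_neqAle (Hp.1 x) andbT eq_sym; apply/eqP => px0.
    have qy y : p ord0 y = 0.
      have : q y = 0 by rewrite -(hq x y) /q px0 mul0r.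
      by move/eqP; rewrite mulf_eq0 (gt_eqF (expR_gt0 _)) orbF => /eqP.
    have := Hp.2; rewrite big1 // => /esym/eqP; rewrite oner_eq0.
    done.
  have [x0 _] : exists x0 : 'I_d, true.
    case: (pickP (fun _ : 'I_d => true)) => [x0 _|none]; first by exists x0.
    have := Hp.2; rewrite big1 => [/esym/eqP|i _]; first by rewrite oner_eq0.
    by have := none i.
  split; first by split.
  move=> v Hv; apply: (is_derive_eq (@dF R d K p v dK pp)).
  have hl x : H K x p + ln (p ord0 x) = ln (q x).
    rewrite /q lnM ?posrE ?expR_gt0 // expRK addrC //.
  under eq_bigr do rewrite hl (hq _ x0) -/h.
  by rewrite -mulr_suml Hv mul0r.
- move=> [[_ pp] Hd].
  have gconst a b : H K a p + ln (p ord0 a) = H K b p + ln (p ord0 b).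
    pose v := @ebasis R d a - @ebasis R d b.
    have Hv : H0 v.
      rewrite /H0 /v; under eq_bigr do rewrite mxE [X in _ + X]mxE.
      by rewrite sumrB !sum_ebasis1 subrr.
    have [_ e1] := Hd v Hv.
    have [_ e2] := @dF R d K p v dK pp.
    move: e2; rewrite e1 /v; under eq_bigr do rewrite mxE [X in (_ + X) * _]mxE mulrBl.
    rewrite sumrB !sum_ebasis => /eqP; rewrite eq_sym subr_eq0 => /eqP.
    by move=> /(congr1 (fun t => t - 1)); rewrite !addrK.
  have hq a b : q a = q b.
    have qe x : q x = expR (H K x p + ln (p ord0 x)).
      have px : p ord0 x \in Num.pos by rewrite posrE.
      by rewrite (expRD (H K x p)) (lnK px) mulrC.
    by rewrite (qe a) (qe b) (gconst a b).
  apply/rowP => y; rewrite colA' mxE big1 // => x _.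
  have E : p ord0 x * expR (H K x p) = p ord0 y * expR (H K y p) := hq x y.
  by rewrite E subrr mulr0.
Qed.
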